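(* Let $\Omega\subset\mathbb{R}^n$ ($n\in\{2,3\}$) be a bounded polygonal/polyhedral Lipschitz domain, $f\in L^2(\Omega)$, $g\in H^1(\Omega)\cap C(\overline\Omega)$ with $g\le0$ on $\partial\Omega$, and $\mathcal T$ a conforming simplicial mesh. Let $(\boldsymbol\sigma_h,\lambda_h,u_h)\in K_h\times M_h$ be the solution of the discrete problem $$(\boldsymbol\sigma_h,\boldsymbol\tau_h-\boldsymbol\sigma_h)_\Omega+(\operatorname{div}(\boldsymbol\tau_h-\boldsymbol\sigma_h)+\mu_h-\lambda_h,u_h)_\Omega\ge(\mu_h-\lambda_h,g)_\Omega\ \ \forall(\boldsymbol\tau_h,\mu_h)\in K_h,\qquad (\operatorname{div}\boldsymbol\sigma_h+\lambda_h,v_h)_\Omega=-(f,v_h)_\Omega\ \ \forall v_h\in M_h.$$ Then: (i) $\operatorname{div}\boldsymbol\sigma_h+\lambda_h=-\Pi_h^0f$; (ii) $(\boldsymbol\sigma_h,\boldsymbol\tau_h)_\Omega+(\operatorname{div}\boldsymbol\tau_h,u_h)_\Omega=0$ for all $\boldsymbol\tau_h\in\mathrm{RT}^0(\mathcal T)$; (iii) $(\lambda_h,u_h-g)_\Omega=0$, or equivalently $\lambda_h(x)\,(u_h(x)-\Pi_h^0g(x))=0$ for a.e. $x\in\Omega$; (iv) $u_h-\Pi_h^0g\ge0$.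
   Context: $M_h:=\mathcal P^0(\mathcal T)$ (piecewise constants), $V_h:=\mathrm{RT}^0(\mathcal T)\times\mathcal P^0(\mathcal T)$ with $\mathrm{RT}^0(\mathcal T)$ the lowest-order Raviart–Thomas space, $K_h:=\{(\boldsymbol\tau_h,\mu_h)\in V_h:\mu_h|_T\ge0\ \forall T\in\mathcal T\}$. $\Pi_h^0$ is the $L^2(\Omega)$-orthogonal projection onto $\mathcal P^0(\mathcal T)$. *)

(* Defs.v *)
From mathcomp Require Import all_boot all_order all_algebra.
From mathcomp Require Import all_classical all_reals all_analysis.
Set Implicit Arguments. Unset Strict Implicit. Unset Printing Implicit Defensive.
Import Order.TTheory GRing.Theory Num.Theory.
Import numFieldNormedType.Exports.
Local Open Scope classical_set_scope.
Local Open Scope ring_scope.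

(** Points of R^n are row vectors 'rV[R]_n; [Rn R n] is R^n equipped with the
    Borel sigma-algebra (generated by the open sets of its usual topology). *)
Definition Rn (R : realType) (n : nat) := g_sigma_algebraType (@open 'rV[R]_n).

Definition box (R : realType) (n : nat) (a b : 'rV[R]_n) : set 'rV[R]_n :=
  [set x | forall i, a ord0 i <= x ord0 i <= b ord0 i].

(** [mu] is the Lebesgue measure on R^n: it gives to every box its volume.
    (This determines a measure on the Borel sets uniquely.) *)
Definition is_lebesgue (R : realType) (n : nat)
    (mu : {measure set (Rn R n) -> \bar R}) : Prop :=
  forall a b : 'rV[R]_n, (forall i, a ord0 i <= b ord0 i) ->
    mu (box a b) = (\prod_(i < n) (b ord0 i - a ord0 i))%:E.

Definition dotp (R : realType) (n : nat) (x y : 'rV[R]_n) : R :=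
  \sum_(i < n) x ord0 i * y ord0 i.

Definition aff_indep (R : realType) (n : nat) (p : 'I_n.+1 -> 'rV[R]_n) : bool :=
  row_free (\matrix_(k < n) (p (lift ord0 k) - p ord0)).

Definition face (R : realType) (n : nat) (p : 'I_n.+1 -> 'rV[R]_n)
    (K : pred 'I_n.+1) : set 'rV[R]_n :=
  [set x | exists l : 'I_n.+1 -> R,
     [/\ forall k, 0 <= l k, forall k, ~~ K k -> l k = 0,
         \sum_k l k = 1 & x = \sum_k l k *: p k]].

Definition simplex (R : realType) (n : nat) (p : 'I_n.+1 -> 'rV[R]_n) :
  set 'rV[R]_n := face p predT.

Definition common_vtx (R : realType) (n : nat) (I : finType)
    (vtx : I -> 'I_n.+1 -> 'rV[R]_n) (i j : I) : pred 'I_n.+1 :=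
  fun k => [exists k', vtx i k == vtx j k'].

Definition conforming_mesh (R : realType) (n : nat) (Omega : set 'rV[R]_n)
    (I : finType) (vtx : I -> 'I_n.+1 -> 'rV[R]_n) : Prop :=
  [/\ forall i, aff_indep (vtx i),
      forall i j, i != j -> simplex (vtx i) <> simplex (vtx j),
      forall i j, i != j ->
        simplex (vtx i) `&` simplex (vtx j) = face (vtx i) (common_vtx vtx i j)
    & \bigcup_(i in [set: I]) simplex (vtx i) = closure Omega].

Definition bounded_domain (R : realType) (n : nat) (Omega : set 'rV[R]_n) : Prop :=
  [/\ open Omega, connected Omega, Omega !=set0 & bounded_set Omega].

Definition L2 (R : realType) (n : nat) (mu : {measure set (Rn R n) -> \bar R})
    (Omega : set 'rV[R]_n) (f : 'rV[R]_n -> R) : Prop :=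
  measurable_fun (Omega : set (Rn R n)) (f : Rn R n -> R) /\
  (\int[mu]_(x in (Omega : set (Rn R n))) ((f x) ^+ 2)%:E < +oo)%E.

Definition partial (R : realType) (n : nat) (k : 'I_n) (f : 'rV[R]_n -> R) :
  'rV[R]_n -> R := fun x => 'D_(delta_mx ord0 k) f x.

Fixpoint Cm (R : realType) (n : nat) (m : nat) (f : 'rV[R]_n -> R) : Prop :=
  continuous f /\
  match m with
  | 0 => True
  | m'.+1 => forall k : 'I_n,
      (forall x, derivable f x (delta_mx ord0 k)) /\ Cm m' (partial k f)
  end.

Definition test_fun (R : realType) (n : nat) (Omega : set 'rV[R]_n)
    (phi : 'rV[R]_n -> R) : Prop :=
  (forall m, Cm m phi) /\
  exists K : set 'rV[R]_n, [/\ compact K, K `<=` Omega & forall x, ~ K x -> phi x = 0].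

Definition H1 (R : realType) (n : nat) (mu : {measure set (Rn R n) -> \bar R})
    (Omega : set 'rV[R]_n) (g : 'rV[R]_n -> R) : Prop :=
  L2 mu Omega g /\
  exists G : 'I_n -> 'rV[R]_n -> R, forall k,
    L2 mu Omega (G k) /\
    forall phi, test_fun Omega phi ->
      \int[mu]_(x in (Omega : set (Rn R n))) (g x * partial k phi x) =
      - \int[mu]_(x in (Omega : set (Rn R n))) (G k x * phi x).

(** piecewise RT^0 fields: on element i, tau(x) = a_i + b_i x *)
Definition pwRT (R : realType) (n : nat) (I : finType) : Type :=
  ((I -> 'rV[R]_n) * (I -> R))%type.

Definition rt_val (R : realType) (n : nat) (I : finType) (tau : pwRT R n I)
    (i : I) (x : 'rV[R]_n) : 'rV[R]_n := tau.1 i + tau.2 i *: x.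

Definition rt_sub (R : realType) (n : nat) (I : finType) (tau sigma : pwRT R n I) :
  pwRT R n I := (fun i => tau.1 i - sigma.1 i, fun i => tau.2 i - sigma.2 i).

(** RT^0(T): piecewise RT^0 fields that are H(div)-conforming, i.e. whose normal
    components are continuous across every interior facet (two elements sharing
    n vertices). *)
Definition RT0 (R : realType) (n : nat) (I : finType)
    (vtx : I -> 'I_n.+1 -> 'rV[R]_n) (tau : pwRT R n I) : Prop :=
  forall i j, i != j -> #|common_vtx vtx i j| = n ->
  forall nu : 'rV[R]_n,
    (forall k k', common_vtx vtx i j k -> common_vtx vtx i j k' ->
       dotp (vtx i k - vtx i k') nu = 0) ->
    forall x, simplex (vtx i) x -> simplex (vtx j) x ->
      dotp (rt_val tau i x - rt_val tau j x) nu = 0.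

(** (elementwise) divergence of x |-> a_i + b_i x, i.e. trace of its Jacobian b_i Id *)
Definition rt_div (R : realType) (n : nat) (I : finType) (tau : pwRT R n I) : I -> R :=
  fun i => n%:R * tau.2 i.

Definition in_Kh (R : realType) (n : nat) (I : finType)
    (vtx : I -> 'I_n.+1 -> 'rV[R]_n) (tau : pwRT R n I) (m : I -> R) : Prop :=
  RT0 vtx tau /\ forall i, 0 <= m i.

(** L^2(Omega) products, computed element by element (the elements cover the
    closure of Omega and overlap only on null sets).  Scalar functions are given
    elementwise as [w : I -> 'rV -> R]; a P^0 function [c : I -> R] has value
    c i on element i. *)
Definition ipL2 (R : realType) (n : nat) (mu : {measure set (Rn R n) -> \bar R})
    (I : finType) (vtx : I -> 'I_n.+1 -> 'rV[R]_n)
    (v w : I -> 'rV[R]_n -> R) : R :=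
  \sum_(i : I) \int[mu]_(x in (simplex (vtx i) : set (Rn R n))) (v i x * w i x).

Definition ipRT (R : realType) (n : nat) (mu : {measure set (Rn R n) -> \bar R})
    (I : finType) (vtx : I -> 'I_n.+1 -> 'rV[R]_n) (sigma tau : pwRT R n I) : R :=
  \sum_(i : I) \int[mu]_(x in (simplex (vtx i) : set (Rn R n)))
     dotp (rt_val sigma i x) (rt_val tau i x).

Definition p0 (R : realType) (n : nat) (I : finType) (c : I -> R) : I -> 'rV[R]_n -> R :=
  fun i _ => c i.
Definition glob (R : realType) (n : nat) (I : finType) (f : 'rV[R]_n -> R) :
  I -> 'rV[R]_n -> R := fun _ x => f x.

(** Pi_h^0: L^2-orthogonal projection onto P^0(T), i.e. elementwise mean value *)
Definition Pi0 (R : realType) (n : nat) (mu : {measure set (Rn R n) -> \bar R})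
    (I : finType) (vtx : I -> 'I_n.+1 -> 'rV[R]_n) (f : 'rV[R]_n -> R) : I -> R :=
  fun i => (fine (mu (simplex (vtx i) : set (Rn R n))))^-1 *
           \int[mu]_(x in (simplex (vtx i) : set (Rn R n))) f x.

(* Main.v *)
Require Import Defs.
From mathcomp Require Import all_boot all_order all_algebra.
From mathcomp Require Import all_classical all_reals all_analysis.
From mathcomp Require Import ring lra.
Import Order.TTheory GRing.Theory Num.Theory.
Import numFieldNormedType.Exports.
Local Open Scope classical_set_scope.
Local Open Scope ring_scope.

Section S.
Variables (R : realType) (n : nat).
Lemma open_meas (A : set 'rV[R]_n) : open A -> measurable (A : set (Rn R n)).
Proof. by move=> oA; apply: sub_sigma_algebra. Qed.
Lemma closed_meas (A : set 'rV[R]_n) : closed A -> measurable (A : set (Rn R n)).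
Proof. move=> cA; rewrite -[A]setCK; apply: measurableC; apply: open_meas. exact: closed_openC. Qed.

Lemma cont_sum m (F : 'I_m -> 'rV[R]_n -> R) :
  (forall i, continuous (F i)) -> continuous (fun x => \sum_i F i x).
Proof.
move=> cF.
suff H : forall s : seq 'I_m, continuous (fun x => \sum_(i <- s) F i x) by apply: H.
elim=> [|a s IH].
  under eq_fun do rewrite big_nil. exact: cst_continuous.
under eq_fun do rewrite big_cons.
move=> x; apply: continuousD; [exact: cF | exact: IH].
Qed.

Lemma coordc (j : 'I_n) : continuous (fun x : 'rV[R]_n => x ord0 j).
Proof. exact: coord_continuous. Qed.

Lemma aff_cont (p : 'rV[R]_n) (c : 'I_n -> R) :
  continuous (fun x : 'rV[R]_n => \sum_j (x ord0 j - p ord0 j) * c j).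
Proof.
apply: cont_sum => j x.
apply: (@continuousM R _ (fun x : 'rV[R]_n => x ord0 j - p ord0 j) (fun=> c j)); last exact: cst_continuous.
apply: (@continuousB R R^o _ (fun x : 'rV[R]_n => x ord0 j) (fun=> p ord0 j)); [exact: coordc | exact: cst_continuous].
Qed.

Lemma closed_ge0 (h : 'rV[R]_n -> R) : continuous h -> closed [set x | 0 <= h x].
Proof. move=> /continuous_closedP ch; exact: (ch _ (@closed_ge R 0)). Qed.
Lemma closed_le1 (h : 'rV[R]_n -> R) (b : R) : continuous h -> closed [set x | h x <= b].
Proof. move=> /continuous_closedP ch; exact: (ch _ (@closed_le R b)). Qed.
End S.

Section Bary.
Variables (R : realType) (n : nat) (P : 'I_n.+1 -> 'rV[R]_n).
Definition Mx : 'M[R]_n := \matrix_(k < n) (P (lift ord0 k) - P ord0).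
Definition bary (x : 'rV[R]_n) : 'rV[R]_n := (x - P ord0) *m invmx Mx.

Lemma comb_eq (l : 'I_n.+1 -> R) : \sum_k l k = 1 ->
  \sum_k l k *: P k - P ord0 = (\row_k l (lift ord0 k)) *m Mx.
Proof.
move=> l1; rewrite mulmx_sum_row.
under [RHS]eq_bigr do rewrite rowK mxE.
have E : P ord0 = \sum_k l k *: P ord0 by rewrite -scaler_suml l1 scale1r.
rewrite [X in _ - X = _]E.
rewrite -sumrB big_ord_recl /= subrr add0r.
by apply: eq_bigr => i _; rewrite scalerBr.
Qed.

Hypothesis hP : aff_indep P.
Lemma Mx_unit : Mx \in unitmx.
Proof. by rewrite -row_free_unit. Qed.

Lemma simplexE : simplex P =
  [set x | (forall k, 0 <= bary x ord0 k) /\ \sum_k bary x ord0 k <= 1].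
Proof.
apply/seteqP; split => x /=.
- move=> [l [l0 _ l1 ->]].
  have hb : bary (\sum_k l k *: P k) = \row_k l (lift ord0 k).
    by rewrite /bary comb_eq // mulmxK // Mx_unit.
  rewrite hb; split => [k|]; first by rewrite mxE.
  under eq_bigr do rewrite mxE.
  move: l1; rewrite big_ord_recl => <-.
  by rewrite lerDr.
- move=> [b0 b1].
  pose l k := oapp (fun i => bary x ord0 i) (1 - \sum_i bary x ord0 i) (unlift ord0 k).
  have l0 : l ord0 = 1 - \sum_i bary x ord0 i by rewrite /l unlift_none.
  have lS i : l (lift ord0 i) = bary x ord0 i by rewrite /l liftK.
  have ls : \sum_k l k = 1.
    by rewrite big_ord_recl l0 (eq_bigr _ (fun i _ => lS i)) subrK.
  exists l; split => //.
  + move=> k; case: (unliftP ord0 k) => [i ->|->]; first by rewrite lS.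
    by rewrite l0 subr_ge0.
  + have H := @comb_eq l ls.
    have E : \row_k l (lift ord0 k) = bary x.
      by apply/rowP => k; rewrite mxE lS.
    rewrite E /bary mulmxKV ?Mx_unit // in H.
    by move/(congr1 (fun y => y + P ord0)): H; rewrite !subrK.
Qed.
End Bary.
Arguments Mx {R n} P.
Arguments bary {R n} P x.

Section Geo.
Variables (R : realType) (n : nat).

Lemma box_closed (a b : 'rV[R]_n) : closed (box a b).
Proof.
have -> : box a b = \bigcap_(i in [set: 'I_n])
   ([set x : 'rV[R]_n | a ord0 i <= x ord0 i] `&` [set x | x ord0 i <= b ord0 i]).
  apply/seteqP; split => x /=.
    by move=> H i _; have /andP[] := H i.
  by move=> H i; have [] := H i I => -> ->.
apply: closed_bigI => i _; apply: closedI.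
- by move: (@coordc R n i) => /continuous_closedP ch; exact: (ch _ (@closed_ge R _)).
- by move: (@coordc R n i) => /continuous_closedP ch; exact: (ch _ (@closed_le R _)).
Qed.

Variable P : 'I_n.+1 -> 'rV[R]_n.

Lemma bary_entry x k :
  bary P x ord0 k = \sum_j (x ord0 j - P ord0 ord0 j) * invmx (Mx P) j k.
Proof. by rewrite /bary !mxE; apply: eq_bigr => j _; rewrite !mxE. Qed.

Lemma bary_cont k : continuous (fun x => bary P x ord0 k).
Proof.
have -> : (fun x => bary P x ord0 k) =
   (fun x => \sum_j (x ord0 j - P ord0 ord0 j) * invmx (Mx P) j k).
  by apply: funext => x; rewrite bary_entry.
exact: aff_cont.
Qed.

Hypothesis hP : aff_indep P.

Lemma simplex_closed : closed (simplex P).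
Proof.
rewrite simplexE //.
have -> : [set x | (forall k, 0 <= bary P x ord0 k) /\ \sum_k bary P x ord0 k <= 1]
  = \bigcap_(k in [set: 'I_n]) [set x | 0 <= bary P x ord0 k] `&`
    [set x | \sum_k bary P x ord0 k <= 1].
  apply/seteqP; split => x /=; first by move=> [H1 H2]; split => // k _; exact: H1.
  by move=> [H1 H2]; split => // k; exact: H1.
apply: closedI.
  by apply: closed_bigI => k _; apply: closed_ge0; exact: bary_cont.
by apply: closed_le1; apply: cont_sum => k; exact: bary_cont.
Qed.

Definition Bd (j : 'I_n) : R := \sum_k `|P k ord0 j|.

Lemma simplex_bound x : simplex P x -> forall j, `|x ord0 j| <= Bd j.
Proof.
move=> [l [l0 _ l1 ->]] j; rewrite summxE.
apply: le_trans (ler_norm_sum _ _ _) _.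
apply: ler_sum => k _; rewrite mxE normrM (ger0_norm (l0 k)).
apply: ler_piMl => //; rewrite -l1 (bigD1 k) //= lerDl sumr_ge0 //.
Qed.

Lemma simplex_in_box : simplex P `<=` box (\row_j (- Bd j)) (\row_j Bd j).
Proof.
move=> x /simplex_bound H i; rewrite !mxE -ler_norml; exact: H.
Qed.

Lemma simplex_compact : compact (simplex P).
Proof.
apply: (subclosed_compact simplex_closed
   (@rV_compact _ _ (fun j => `[(- Bd j), Bd j]%classic) _)).
  by move=> j; exact: segment_compact.
move=> x /simplex_bound H i /=; rewrite in_itv /= -ler_norml; exact: H.
Qed.
End Geo.
Arguments Bd {R n} P j.

Section Meas.
Variables (R : realType) (n : nat) (mu : {measure set (Rn R n) -> \bar R}).
Hypothesis hmu : is_lebesgue mu.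
Variable P : 'I_n.+1 -> 'rV[R]_n.
Hypothesis hP : aff_indep P.

Lemma simplex_meas : measurable (simplex P : set (Rn R n)).
Proof. by apply: closed_meas; exact: simplex_closed. Qed.

Lemma box_meas (a b : 'rV[R]_n) : measurable (box a b : set (Rn R n)).
Proof. by apply: closed_meas; exact: box_closed. Qed.

Lemma mu_fin : (mu (simplex P : set (Rn R n)) < +oo)%E.
Proof.
have hab : forall i, (\row_j (- Bd P j)) ord0 i <= (\row_j Bd P j) ord0 i.
  move=> i; rewrite !mxE; apply: (@le_trans _ _ 0); last exact: sumr_ge0.
  by rewrite oppr_le0 sumr_ge0.
apply: (@le_lt_trans _ _ (mu (box (\row_j (- Bd P j)) (\row_j Bd P j) : set (Rn R n)))).
  apply: le_measure; rewrite ?inE; [exact: simplex_meas | exact: box_meas |].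
  exact: simplex_in_box.
by rewrite hmu // ltry.
Qed.

Lemma mu_pos : (0 < mu (simplex P : set (Rn R n)))%E.
Proof.
pose N : R := n.+1%:R.
pose Minv := invmx (Mx P).
pose K : R := \sum_j \sum_k `|Minv j k| + 1.
have K0 : 0 < K by rewrite ltr_wpDl // sumr_ge0 // => j _; exact: sumr_ge0.
have N0 : 0 < N by rewrite ltr0n.
pose d : R := (N ^+ 2 * K)^-1.
have d0 : 0 < d by rewrite invr_gt0 mulr_gt0 // exprn_gt0.
pose c : 'rV[R]_n := P ord0 + const_mx N^-1 *m Mx P.
pose a := c - const_mx d.
pose b := c + const_mx d.
have hab : forall i, a ord0 i <= b ord0 i.
  by move=> i; rewrite !mxE; lra.
have sub : box a b `<=` simplex P.
  move=> x hx; rewrite simplexE //=.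
  have hb : bary P x = (x - c) *m Minv + const_mx N^-1.
    rewrite /bary -/Minv.
    have -> : x - P ord0 = (x - c) + const_mx N^-1 *m Mx P.
      by rewrite /c opprD addrA subrK.
    by rewrite mulmxDl mulmxK // Mx_unit.
  have he : forall k, `|((x - c) *m Minv) ord0 k| <= N^-2.
    move=> k; rewrite mxE.
    apply: le_trans (ler_norm_sum _ _ _) _.
    apply: (@le_trans _ _ (\sum_j d * `|Minv j k|)).
      apply: ler_sum => j _; rewrite normrM ler_wpM2r //.
      have /andP[h1 h2] := hx j; rewrite !mxE in h1 h2 *.
      by rewrite ler_norml; apply/andP; split; lra.
    rewrite -mulr_sumr.
    have -> : N^-2 = d * K.
      by rewrite /d; field; rewrite ?gt_eqF ?mulf_neq0 ?expf_neq0 // gt_eqF.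
    rewrite ler_wpM2l ?ltW // /K.
    apply: (@le_lt_trans _ _ (\sum_j \sum_k `|Minv j k|)); last by rewrite ltrDl.
    apply: ler_sum => j _; rewrite (bigD1 k) //= lerDl sumr_ge0 //.
  have hbk k : bary P x ord0 k = ((x - c) *m Minv) ord0 k + N^-1.
    by rewrite hb mxE [const_mx _ _ _]mxE.
  have hNy : N * N^-1 = 1 by rewrite mulfV // gt_eqF.
  have y0 : 0 < N^-1 by rewrite invr_gt0.
  have hN1 : N = n%:R + 1 by rewrite /N -natr1.
  split.
    move=> k; rewrite hbk; have := he k; rewrite ler_norml => /andP[h1 _].
    apply: (@le_trans _ _ (N^-1 - N^-2)); last by rewrite [leRHS]addrC lerD2l.
    have y1 : N^-1 <= 1 by rewrite invf_le1 // hN1 lerDr.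
    by rewrite subr_ge0 expr2 invfM ler_piMr // ltW.
  apply: (@le_trans _ _ (\sum_(k < n) (N^-1 + N^-2))).
    apply: ler_sum => k _; rewrite hbk; have := he k; rewrite ler_norml => /andP[_ h2].
    by rewrite addrC lerD2l.
  rewrite sumr_const card_ord -mulr_natr.
  rewrite expr2 invfM.
  have -> : (N^-1 + N^-1 * N^-1) * n%:R = 1 - N^-1 * N^-1.
    rewrite (_ : n%:R = N - 1); last by rewrite hN1 addrK.
    by field; rewrite addrC natr1 pnatr_eq0.
  by rewrite gerBl mulr_ge0 // ltW.
apply: (@lt_le_trans _ _ (mu (box a b : set (Rn R n)))).
  rewrite hmu // lte_fin; apply: prodr_gt0 => i _.
  by rewrite !mxE opprD addrACA subrr add0r opprK addr_gt0.
apply: le_measure; rewrite ?inE; [exact: box_meas | exact: simplex_meas | exact: sub].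
Qed.

Lemma mu_fine_pos : 0 < fine (mu (simplex P : set (Rn R n))).
Proof. by apply: fine_gt0; rewrite mu_pos mu_fin. Qed.
End Meas.

Lemma fine_subN (R : realType) (a b : \bar R) : (0 <= a)%E -> (0 <= b)%E ->
  fine (a - b)%E = - fine (b - a)%E.
Proof.
by case: a => [a| |] //; case: b => [b| |] //= _ _; rewrite ?oppr0 // opprB.
Qed.

Section Rint.
Context d (T : measurableType d) (R : realType) (mu : {measure set T -> \bar R}).
Lemma RintN (D : set T) (f : T -> R) :
  \int[mu]_(x in D) (- f x) = - \int[mu]_(x in D) f x.
Proof.
rewrite /Rintegral.
have -> : (fun x => (- f x)%:E) = (\- (fun x => (f x)%:E))%E by apply: funext.
rewrite integralE funeposN funenegN [in RHS]integralE.
by apply: fine_subN; apply: integral_ge0 => x _; [exact: funeneg_ge0 | exact: funepos_ge0].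
Qed.
End Rint.

Section Int.
Variables (R : realType) (n : nat) (mu : {measure set (Rn R n) -> \bar R}).
Hypothesis hmu : is_lebesgue mu.
Variable P : 'I_n.+1 -> 'rV[R]_n.
Hypothesis hP : aff_indep P.

Lemma cont_meas (h : 'rV[R]_n -> R) : {within simplex P, continuous h} ->
  measurable_fun (simplex P : set (Rn R n)) (h : Rn R n -> R).
Proof.
move=> /continuousP ch.
apply: (measurability _ (measurable_realfun.RGenOpens.measurableE R)).
move=> _ [_ [a [b ->]] <-].
have : open (h @^-1` `]a, b[%classic : set (subspace (simplex P))).
  by apply: ch; exact: interval_open.
move=> /open_subspaceP [V oV VD].
rewrite setIC -VD; apply: measurableI; first exact: open_meas.
exact: simplex_meas.
Qed.

Lemma cont_int (h : 'rV[R]_n -> R) : {within simplex P, continuous h} ->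
  mu.-integrable (simplex P : set (Rn R n)) (EFin \o (h : Rn R n -> R)).
Proof.
move=> ch; apply: measurable_bounded_integrable.
- exact: simplex_meas.
- exact: mu_fin.
- exact: cont_meas.
have /compact_bounded hb := continuous_compact ch (@simplex_compact R n P hP).
move: hb; rewrite /bounded_near /=; apply: filterS => M HM x Dx; apply: HM; by exists x.
Qed.
End Int.

Lemma sum_single (R : realType) (I : finType) (X : I -> R) j :
  (forall i, i != j -> X i = 0) -> \sum_i X i = X j.
Proof. by move=> X0; rewrite (bigD1 j) //= big1 ?addr0. Qed.

Section Comp.
Variables (R : realType) (n : nat) (mu : {measure set (Rn R n) -> \bar R}).
Hypothesis hmu : is_lebesgue mu.
Variables (I : finType) (vtx : I -> 'I_n.+1 -> 'rV[R]_n).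
Hypothesis hv : forall i, aff_indep (vtx i).

Definition msr i := fine (mu (simplex (vtx i) : set (Rn R n))).
Definition Rintg (h : 'rV[R]_n -> R) i := \int[mu]_(x in (simplex (vtx i) : set (Rn R n))) h x.

Lemma ip_pp (a b : I -> R) : ipL2 mu vtx (p0 a) (p0 b) = \sum_i a i * b i * msr i.
Proof.
apply: eq_bigr => i _; rewrite /p0 Rintegral_cst //; exact: simplex_meas.
Qed.

Lemma ip_pg (a : I -> R) h : (forall i, {within simplex (vtx i), continuous h}) ->
  ipL2 mu vtx (p0 a) (glob h) = \sum_i a i * Rintg h i.
Proof.
move=> hh; apply: eq_bigr => i _; rewrite /p0 /glob RintegralZl //.
  exact: simplex_meas.
exact: cont_int.
Qed.

Lemma ip_lam (a u : I -> R) h : (forall i, {within simplex (vtx i), continuous h}) ->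
  ipL2 mu vtx (p0 a) (fun i x => u i - h x) = \sum_i a i * (u i * msr i - Rintg h i).
Proof.
move=> hh; apply: eq_bigr => i _; rewrite /p0 RintegralZl //; last 2 first.
- exact: simplex_meas.
- apply: cont_int => //; move=> x; apply: continuousB; last exact: hh.
  exact: cst_continuous.
rewrite RintegralB //; last 3 first.
- exact: simplex_meas.
- apply: cont_int => //; apply: continuous_subspaceT; exact: cst_continuous.
- exact: cont_int.
by rewrite Rintegral_cst //; exact: simplex_meas.
Qed.

Lemma ip_ind h j : ipL2 mu vtx (glob h) (p0 (fun i => (i == j)%:R)) = Rintg h j.
Proof.
rewrite /ipL2 (@sum_single _ _ _ j) => [|i ij].
  by rewrite /p0 /glob eqxx; apply: eq_Rintegral => x _; rewrite mulr1.
rewrite /p0 /glob (negbTE ij) (@eq_Rintegral _ _ _ _ _ (fun=> 0)).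
  by rewrite Rintegral_cst ?mul0r //; exact: simplex_meas.
by move=> x _; rewrite mulr0.
Qed.
End Comp.
Arguments msr {R n} mu {I} vtx i.
Arguments Rintg {R n} mu {I} vtx h i.

Section RT.
Variables (R : realType) (n : nat) (I : finType).
Implicit Types (s t : pwRT R n I).

Definition pw_add s t : pwRT R n I := (fun i => s.1 i + t.1 i, fun i => s.2 i + t.2 i).
Definition pw_opp t : pwRT R n I := (fun i => - t.1 i, fun i => - t.2 i).

Lemma dotpD (a b c : 'rV[R]_n) : dotp (a + b) c = dotp a c + dotp b c.
Proof. by rewrite /dotp -big_split; apply: eq_bigr => i _; rewrite mxE mulrDl. Qed.

Lemma dotpN (a c : 'rV[R]_n) : dotp (- a) c = - dotp a c.
Proof. by rewrite /dotp -sumrN; apply: eq_bigr => i _; rewrite mxE mulNr. Qed.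

Lemma dotpNr (a c : 'rV[R]_n) : dotp a (- c) = - dotp a c.
Proof. by rewrite /dotp -sumrN; apply: eq_bigr => i _; rewrite mxE mulrN. Qed.

Lemma dotp0r (a : 'rV[R]_n) : dotp a 0 = 0.
Proof. by rewrite /dotp big1 // => i _; rewrite mxE mulr0. Qed.

Lemma rt_val_add s t i x : rt_val (pw_add s t) i x = rt_val s i x + rt_val t i x.
Proof. by rewrite /rt_val /= scalerDl addrACA. Qed.

Lemma rt_val_opp t i x : rt_val (pw_opp t) i x = - rt_val t i x.
Proof. by rewrite /rt_val /= scaleNr opprD. Qed.

Lemma rt_sub_add s t : rt_sub (pw_add s t) s = t.
Proof.
by case: t => t1 t2; rewrite /rt_sub /=; congr pair; apply: funext => i; rewrite addrAC subrr add0r.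
Qed.

Lemma rt_sub_self s i x : rt_val (rt_sub s s) i x = 0.
Proof. by rewrite /rt_val /rt_sub /= !subrr scale0r addr0. Qed.

Variable vtx : I -> 'I_n.+1 -> 'rV[R]_n.

Lemma RT0_add s t : RT0 vtx s -> RT0 vtx t -> RT0 vtx (pw_add s t).
Proof.
move=> hs ht i j ij cn nu hnu x xi xj.
rewrite !rt_val_add opprD addrACA dotpD.
by rewrite (hs i j ij cn nu hnu x xi xj) (ht i j ij cn nu hnu x xi xj) addr0.
Qed.

Lemma RT0_opp t : RT0 vtx t -> RT0 vtx (pw_opp t).
Proof.
move=> ht i j ij cn nu hnu x xi xj.
by rewrite !rt_val_opp -opprD dotpN (ht i j ij cn nu hnu x xi xj) oppr0.
Qed.

Variable mu : {measure set (Rn R n) -> \bar R}.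

Lemma ipRT_opp s t : ipRT mu vtx s (pw_opp t) = - ipRT mu vtx s t.
Proof.
rewrite /ipRT -sumrN; apply: eq_bigr => i _.
rewrite -RintN; apply: eq_Rintegral => x _.
by rewrite rt_val_opp dotpNr.
Qed.

Lemma ipRT_self0 s : ipRT mu vtx s (rt_sub s s) = 0.
Proof.
rewrite /ipRT big1 // => i _.
by rewrite /Rintegral integral0_eq //= => x _; rewrite rt_sub_self dotp0r.
Qed.
End RT.
Arguments pw_add {R n I} s t.
Arguments pw_opp {R n I} t.

Theorem proposition3p3 (R : realType) (n : nat)
  (mu : {measure set (Rn R n) -> \bar R})
  (Omega : set 'rV[R]_n) (f g : 'rV[R]_n -> R)
  (I : finType) (vtx : I -> 'I_n.+1 -> 'rV[R]_n)
  (sigma_h : pwRT R n I) (lambda_h u_h : I -> R) :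
  (n == 2)%N || (n == 3)%N ->
  is_lebesgue mu ->
  bounded_domain Omega ->
  L2 mu Omega f ->
  H1 mu Omega g ->
  {within closure Omega, continuous g} ->
  (forall x, closure Omega x -> ~ Omega x -> g x <= 0) ->
  conforming_mesh Omega vtx ->
  (* (sigma_h, lambda_h) in K_h, u_h in M_h solve the discrete problem *)
  in_Kh vtx sigma_h lambda_h ->
  (forall (tau_h : pwRT R n I) (mu_h : I -> R), in_Kh vtx tau_h mu_h ->
     ipRT mu vtx sigma_h (rt_sub tau_h sigma_h)
     + ipL2 mu vtx
         (p0 (fun i => rt_div (rt_sub tau_h sigma_h) i + mu_h i - lambda_h i))
         (p0 u_h)
     >= ipL2 mu vtx (p0 (fun i => mu_h i - lambda_h i)) (glob g)) ->
  (forall v_h : I -> R,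
     ipL2 mu vtx (p0 (fun i => rt_div sigma_h i + lambda_h i)) (p0 v_h)
     = - ipL2 mu vtx (glob f) (p0 v_h)) ->
  [/\ (* (i) *)
      forall i, rt_div sigma_h i + lambda_h i = - Pi0 mu vtx f i,
      (* (ii) *)
      forall tau_h : pwRT R n I, RT0 vtx tau_h ->
        ipRT mu vtx sigma_h tau_h + ipL2 mu vtx (p0 (rt_div tau_h)) (p0 u_h) = 0,
      (* (iii) *)
      ipL2 mu vtx (p0 lambda_h) (fun i x => u_h i - g x) = 0 /\
      (forall i, lambda_h i * (u_h i - Pi0 mu vtx g i) = 0)
    & (* (iv) *)
      forall i, 0 <= u_h i - Pi0 mu vtx g i].
Proof.
move=> _ hmu _ _ _ gcont _ [hv _ _ hcov] [hs hl] Hvi Heq.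
have hg i : {within simplex (vtx i), continuous g}.
  apply: continuous_subspaceW gcont => x xi; rewrite -hcov; by exists i.
pose m i := msr mu vtx i.
have ipp := @ip_pp R n mu I vtx hv.
have ipg := @ip_pg R n mu hmu I vtx hv.
have iplam := @ip_lam R n mu hmu I vtx hv.
have ipind := @ip_ind R n mu I vtx hv.
have mpos i : 0 < m i by apply: mu_fine_pos.
have mne0 i : m i != 0 by rewrite gt_eqF.
have PiE h i : Pi0 mu vtx h i = (m i)^-1 * Rintg mu vtx h i by [].
have key j t : 0 <= lambda_h j + t ->
    t * Rintg mu vtx g j <= t * u_h j * m j.
  move=> hjt.
  have := Hvi sigma_h (fun i => lambda_h i + (i == j)%:R * t).
  have hK : in_Kh vtx sigma_h (fun i => lambda_h i + (i == j)%:R * t).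
    split => // i; case: (eqVneq i j) => [->|ij]; first by rewrite mul1r.
    by rewrite mul0r addr0.
  move=> /(_ hK); rewrite ipRT_self0 add0r ipp (ipg _ _ hg).
  rewrite (bigD1 j) //= big1 ?addr0; last first.
    move=> i ij; rewrite (negbTE ij) mul0r addr0 subrr mul0r //.
  rewrite (bigD1 j) //= big1 ?addr0; last first.
    move=> i ij; rewrite /rt_div /rt_sub /= subrr mulr0 add0r (negbTE ij) mul0r addr0 subrr.
    by rewrite !mul0r.
  rewrite /rt_div /rt_sub /= subrr mulr0 add0r eqxx mul1r.
  by rewrite [_ + t]addrC addrK.
split.
- move=> j; have := Heq (fun i => (i == j)%:R).
  rewrite ipp ipind => E.
  have S := @sum_single R I (fun i => (rt_div sigma_h i + lambda_h i) * (i == j)%:R * msr mu vtx i) j.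
  rewrite S in E; last by move=> i ij; rewrite (negbTE ij) mulr0 mul0r.
  rewrite eqxx mulr1 PiE in E *.
  by apply: (mulIf (mne0 j)); rewrite E mulNr mulrAC mulVf // mul1r.
- have Q0 t : RT0 vtx t ->
     0 <= ipRT mu vtx sigma_h t + ipL2 mu vtx (p0 (rt_div t)) (p0 u_h).
    move=> ht.
    have hK : in_Kh vtx (pw_add sigma_h t) lambda_h by split => //; exact: RT0_add.
    have := Hvi _ _ hK; rewrite rt_sub_add (ipg _ _ hg) big1; last first.
      by move=> i _; rewrite subrr mul0r.
    suff -> : (fun i => rt_div t i + lambda_h i - lambda_h i) = rt_div t by [].
    by apply: funext => i; rewrite addrK.
  move=> t ht; apply/eqP; rewrite eq_le Q0 // andbT.
  have := Q0 _ (@RT0_opp R n I vtx t ht); rewrite ipRT_opp !ipp.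
  have -> : \sum_i rt_div (pw_opp t) i * u_h i * msr mu vtx i =
     - \sum_i rt_div t i * u_h i * msr mu vtx i.
    by rewrite -sumrN; apply: eq_bigr => i _; rewrite /rt_div /= mulrN !mulNr.
  by rewrite -opprD oppr_ge0.
- have Z j : lambda_h j * (u_h j * m j - Rintg mu vtx g j) = 0.
    apply/eqP; rewrite eq_le; apply/andP; split.
      have := key j (- lambda_h j); rewrite subrr lexx => /(_ isT).
      by rewrite !mulNr lerN2 mulrBr mulrA subr_le0.
    apply: mulr_ge0; first exact: hl.
    rewrite subr_ge0; have := key j 1; rewrite !mul1r; apply; exact: addr_ge0 (hl j) ler01.
  split.
    by rewrite (iplam _ _ _ hg) big1 // => i _; exact: Z.
  move=> j; rewrite PiE.
  have -> : u_h j - (m j)^-1 * Rintg mu vtx g j =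
      (m j)^-1 * (u_h j * m j - Rintg mu vtx g j).
    by rewrite mulrBr mulrCA mulVf // mulr1.
  by rewrite mulrCA Z mulr0.
- move=> j; rewrite PiE subr_ge0 ler_pdivrMl // mulrC.
  have := key j 1; rewrite !mul1r; apply; exact: addr_ge0 (hl j) ler01.
Qed.
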